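(* $\operatorname{conv}(M^\Lambda)=\operatorname{proj}_{(\lambda,w)}\bigl(\mathrm{RLT}_d(\Lambda)\bigr)=R$, where $$R=\Bigl\{(\lambda,w)\ \Bigm|\ w\ge0,\ \sum_{j\in E}w_j=1,\ \lambda_{ij_i}=\sum_{p\in E:\,p_i=j_i}w_p\ \text{ for }i\in[d],\ j\in E\Bigr\}.$$
   Context: Let $d,n$ be positive integers, $[d]=\{1,\dots,d\}$, $E=\{0,\dots,n\}^d$. $\Lambda_i=\{\lambda_i\in\mathbb{R}^{n+1}\mid\sum_{j=0}^n\lambda_{ij}=1,\lambda_i\ge0\}$, $\Lambda=\prod_{i=1}^d\Lambda_i$, and $M^\Lambda=\{(\lambda,w)\mid\lambda\in\Lambda,\ w_j=\prod_{i=1}^d\lambda_{ij_i}\text{ for }j\in E\}$. $\mathrm{RLT}_d(\Lambda)$ is the $d$-th level reformulation-linearization relaxation of $\Lambda$: for each $I\subseteq[d]$ and map $j:I\to\{0,\dots,n\}$ introduce a variable $y_{(I,j)}$ linearizing $\prod_{i\in I}\lambda_{ij(i)}$, with $y_{(\emptyset,\cdot)}=1$, $y_{(\{i\},j)}=\lambda_{ij(i)}$ and $w_j=y_{([d],j)}$ for $j\in E$. The constraints are the linearizations of the products $\prod_{i\in I}\lambda_{ij(i)}\cdot\prod_{i\notin I}(1-\sum_{k=0}^n\lambda_{ik})$ of one constraint factor per block: $y_{([d],j)}\ge0$ for all $j\in E$, and for every proper subset $I\subsetneq[d]$ and $j:I\to\{0,\dots,n\}$, $\sum_{I\subseteq I'\subseteq[d]}(-1)^{|I'\setminus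 I|}\sum_{j':I'\to\{0,\dots,n\},\ j'|_I=j}y_{(I',j')}=0$. *)

(* Defs.v *)
From mathcomp Require Import all_boot all_order all_algebra.
Set Implicit Arguments. Unset Strict Implicit. Unset Printing Implicit Defensive.
Import Order.TTheory GRing.Theory Num.Theory.
Local Open Scope ring_scope.

Section RLT.
Variables (R : realFieldType) (d n : nat).

(* Blocks [d] are indexed by 'I_d (0-based), entries {0..n} by 'I_n.+1. *)
Definition Eidx := {ffun 'I_d -> 'I_n.+1}.

Definition point := (('I_d -> 'I_n.+1 -> R) * (Eidx -> R))%type.

Definition in_Lambda (lam : 'I_d -> 'I_n.+1 -> R) : Prop :=
  forall i : 'I_d, (forall j, 0 <= lam i j) /\ \sum_(j < n.+1) lam i j = 1.

Definition MLambda (x : point) : Prop :=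
  in_Lambda x.1 /\ forall j : Eidx, x.2 j = \prod_(i < d) x.1 i (j i).

Definition conv (S : point -> Prop) (x : point) : Prop :=
  exists (m : nat) (mu : 'I_m -> R) (p : 'I_m -> point),
    (forall k, 0 <= mu k) /\ \sum_(k < m) mu k = 1 /\ (forall k, S (p k)) /\
    (forall i j, x.1 i j = \sum_(k < m) mu k * (p k).1 i j) /\
    (forall e, x.2 e = \sum_(k < m) mu k * (p k).2 e).

(* A pair (I, j) with I subset of [d] and j : I -> {0..n} is encoded as a
   partial map jp : 'I_d -> option 'I_n.+1 with domain I. *)
Definition pmap := {ffun 'I_d -> option 'I_n.+1}.
Definition pdom (jp : pmap) : {set 'I_d} := [set i | jp i != None].
Definition pextends (jp' jp : pmap) : bool :=
  [forall i, (jp i != None) ==> (jp' i == jp i)].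

Definition RLT_feasible (y : pmap -> R) (x : point) : Prop :=
  y [ffun _ => None] = 1 /\
  (forall (i : 'I_d) (k : 'I_n.+1),
      y [ffun i' => if i' == i then Some k else None] = x.1 i k) /\
  (forall j : Eidx, x.2 j = y [ffun i => Some (j i)]) /\
  (forall j : Eidx, 0 <= y [ffun i => Some (j i)]) /\
  (* factor-product constraints for proper subsets I *)
  (forall jp : pmap, pdom jp != setT ->
     \sum_(jp' : pmap | pextends jp' jp)
        (-1) ^+ #|pdom jp' :\: pdom jp| * y jp' = 0).

Definition projRLT (x : point) : Prop := exists y : pmap -> R, RLT_feasible y x.

Definition Rset (x : point) : Prop :=
  (forall j : Eidx, 0 <= x.2 j) /\ \sum_(j : Eidx) x.2 j = 1 /\
  (forall (i : 'I_d) (j : Eidx), x.1 i (j i) = \sum_(p : Eidx | p i == j i) x.2 p).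

End RLT.

(* Main.v *)
Require Import Defs.
From mathcomp Require Import all_boot all_order all_algebra.
From mathcomp Require Import zify.
Import Order.TTheory GRing.Theory Num.Theory.
Local Open Scope ring_scope.

Section Proofs.
Variables (R : realFieldType) (d n : nat).
Local Notation E := (Eidx d n).
Local Notation P := (Defs.pmap d n).
Local Notation pt := (point R d n).

Definition fullp (e : E) : P := [ffun i => Some (e i)].
Definition single (i : 'I_d) (k : 'I_n.+1) : P :=
  [ffun i' => if i' == i then Some k else None].
Definition sgn (jp' jp : P) : R := (-1) ^+ #|pdom jp' :\: pdom jp|.
Definition yof (x : pt) (jp : P) : R :=
  \sum_(e : E | pextends (fullp e) jp) x.2 e.

Lemma pextends_trans {a b c : P} : pextends a b -> pextends b c -> pextends a c.
Proof.
move=> /forallP Hab /forallP Hbc; apply/forallP => i; apply/implyP => Hc.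
have Hb : b i == c i := implyP (Hbc i) Hc.
have Hbn : b i != None by rewrite (eqP Hb).
by rewrite (eqP (implyP (Hab i) Hbn)).
Qed.

Lemma pextends_refl (a : P) : pextends a a.
Proof. by apply/forallP => i; apply/implyP. Qed.

Lemma key (jp : P) (e : E) : pdom jp != setT ->
  \sum_(jp' : P | pextends jp' jp && pextends (fullp e) jp') sgn jp' jp = 0.
Proof.
move=> Hjp.
case He: (pextends (fullp e) jp); last first.
  rewrite big1 // => jp' /andP [H1 H2].
  by rewrite (pextends_trans H2 H1) in He.
pose c i (o : option 'I_n.+1) : R := if jp i != None then (o == jp i)%:R
   else if o == None then 1 else if o == Some (e i) then -1 else 0.
have Hprod : forall jp' : P, \prod_i c i (jp' i) =
    if pextends jp' jp && pextends (fullp e) jp' then sgn jp' jp else 0.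
  move=> jp'; case: ifP => [/andP [H1 H2] | Hf].
    rewrite /sgn -prodr_const [RHS]big_mkcond /=. apply: eq_bigr => i _.
    move: (implyP (forallP H1 i)) (implyP (forallP H2 i)) (implyP (forallP He i)).
    rewrite /c !inE !ffunE.
    case: (jp i) => [a|]; case: (jp' i) => [b|] //=.
    - by move=> /(_ isT) ->.
    - by move=> /(_ isT).
    - by move=> _ /(_ isT) /eqP <-; rewrite eqxx.
  have [i Hi] : exists i, c i (jp' i) == 0.
    apply/existsP; apply: contraFT Hf; rewrite negb_exists => /forallP Hall.
    apply/andP; split; apply/forallP => i; have := Hall i;
      have := implyP (forallP He i); rewrite /c !ffunE;
      case: (jp i) => [a|]; case: (jp' i) => [b|] //=;
      try (case: eqP => //=; fail);
      try (move=> /(_ isT) /eqP [<-]; case: eqP => //= [[->]] //; fail);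
      try (case: eqP => //= [[->]] //; rewrite ?oppr_eq0 ?oner_eq0 //; fail).
    all: try (move=> /(_ isT) /eqP [?]; subst); rewrite ?pnatr_eq0 ?eqb0 ?negbK; try (by move=> ->); try (by rewrite eq_sym). by move=> _; case: ifP => [/eqP -> | _]; rewrite ?eqxx.
  by rewrite (bigD1 i) //= (eqP Hi) mul0r.
rewrite big_mkcond /= (eq_bigr _ (fun jp' _ => esym (Hprod jp'))) /=.
rewrite -bigA_distr_bigA.
have [i0 Hi0] : exists i0, i0 \notin pdom jp.
  by move: Hjp; rewrite -properT => /properP [_ [i0 _ H]]; exists i0.
have Hn : jp i0 = None by move: Hi0; rewrite inE; case: (jp i0).
rewrite (bigD1 i0) //= [X in X * _](_ : _ = 0) ?mul0r //.
rewrite (bigD1 None) //= (bigD1 (Some (e i0))) //= big1 => [|o /andP [H1 H2]].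
  by rewrite /c Hn /= eqxx addr0 subrr.
by rewrite /c Hn /= (negbTE H1) (negbTE H2).
Qed.

Lemma yof_constr (x : pt) (jp : P) : pdom jp != setT ->
  \sum_(jp' | pextends jp' jp) sgn jp' jp * yof x jp' = 0.
Proof.
move=> Hjp.
under eq_bigr => jp' _ do rewrite /yof big_distrr /=.
rewrite (exchange_big_dep xpredT) //=.
by apply: big1 => e _; rewrite -mulr_suml key // mul0r.
Qed.

Lemma fullp_ext (e e' : E) : pextends (fullp e) (fullp e') = (e == e').
Proof.
apply/forallP/eqP => [H|->].
  apply/ffunP => i; have := implyP (H i); rewrite !ffunE.
  by move=> /(_ isT) /eqP [].
by move=> i; apply/implyP => _.
Qed.

Lemma yof_full (x : pt) e : yof x (fullp e) = x.2 e.
Proof.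
rewrite /yof (eq_bigl (fun e' => e' == e)) ?big_pred1_eq // => e'.
exact: fullp_ext.
Qed.

Lemma single_ext (e : E) i k : pextends (fullp e) (single i k) = (e i == k).
Proof.
apply/forallP/idP => [H | /eqP Hk i'].
  have := implyP (H i); rewrite !ffunE eqxx.
  by move=> /(_ isT) /eqP [->].
rewrite !ffunE; case: (i' =P i) => [->|_] /=; rewrite ?Hk //.
Qed.

Lemma yof_single (x : pt) i k :
  yof x (single i k) = \sum_(e : E | e i == k) x.2 e.
Proof. by apply: eq_bigl => e; rewrite single_ext. Qed.

Lemma yof_empty (x : pt) : yof x [ffun _ => None] = \sum_(e : E) x.2 e.
Proof. by apply: eq_bigl => e; apply/forallP => i; rewrite ffunE. Qed.

Lemma R_RLT (x : pt) : Rset x -> RLT_feasible (yof x) x.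
Proof.
move=> [H0 [H1 H2]].
split; first by rewrite yof_empty.
split.
  move=> i k; rewrite (yof_single x i k).
  by have := H2 i [ffun _ => k]; rewrite ffunE => ->.
split; first by move=> j; rewrite (yof_full x j).
split; first by move=> j; rewrite (yof_full x j).
by move=> jp Hjp; have := yof_constr x jp Hjp.
Qed.

Lemma measure {jp' jp : P} : pextends jp' jp -> jp' != jp ->
  (#|pdom jp| < #|pdom jp'|)%N.
Proof.
move=> H Hne; apply: proper_card; rewrite properEneq; apply/andP; split.
  apply: contra Hne => /eqP Hdom; apply/eqP/ffunP => i.
  have := implyP (forallP H i).
  have : (i \in pdom jp') = (i \in pdom jp) by rewrite Hdom.
  rewrite !inE; case: (jp i) => [a|]; case: (jp' i) => [b|] //=.
  by move=> _ /(_ isT) /eqP.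
apply/subsetP => i; rewrite !inE => Hi.
by rewrite (eqP (implyP (forallP H i) Hi)).
Qed.

Lemma RLT_yof {y : P -> R} {x : pt} : RLT_feasible y x -> forall jp, y jp = yof x jp.
Proof.
move=> [F1 [F2 [F3 [F4 F5]]]].
suff : forall k jp, (d - #|pdom jp| <= k)%N -> y jp = yof x jp.
  by move=> H jp; apply: (H d); rewrite leq_subr.
elim=> [|k IH] jp Hk.
  case: (eqVneq (pdom jp) setT) => Hjp.
    pose e0 : E := [ffun i => odflt ord0 (jp i)].
    have -> : jp = fullp e0.
      apply/ffunP => i; rewrite !ffunE.
      have : i \in pdom jp by rewrite Hjp inE.
      by rewrite inE; case: (jp i).
    by rewrite yof_full -F3.
  have := proper_card (eq_ind_r (fun b => is_true b) Hjp (properT _)).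
  rewrite cardsT card_ord; lia.
case: (eqVneq (pdom jp) setT) => Hjp.
  pose e0 : E := [ffun i => odflt ord0 (jp i)].
  have -> : jp = fullp e0.
    apply/ffunP => i; rewrite !ffunE.
    have : i \in pdom jp by rewrite Hjp inE.
    by rewrite inE; case: (jp i).
  by rewrite yof_full -F3.
have Hc := F5 jp Hjp. rewrite (bigD1 jp) /= ?pextends_refl // in Hc.
have Hy := yof_constr x jp Hjp. rewrite /sgn (bigD1 jp) /= ?pextends_refl // in Hy.
rewrite setDv cards0 expr0 !mul1r in Hc Hy.
rewrite (eq_bigr (fun jp' => (-1) ^+ #|pdom jp' :\: pdom jp| * yof x jp')) in Hc.
  by apply: (addIr (\sum_(i | pextends i jp && (i != jp)) (-1) ^+ #|pdom i :\: pdom jp| * yof x i)); rewrite Hc Hy.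
move=> jp' /andP [H1 H2]; congr (_ * _); apply: IH.
have := measure H1 H2.
have : (#|pdom jp'| <= d)%N by rewrite -[X in (_ <= X)%N](card_ord d); apply: max_card.
lia.
Qed.

Lemma RLT_R (y : P -> R) (x : pt) : RLT_feasible y x -> Rset x.
Proof.
move=> H; have Hy := RLT_yof H.
move: H => [F1 [F2 [F3 [F4 F5]]]].
split; first by move=> j; rewrite F3.
split; first by rewrite -yof_empty -Hy.
by move=> i j; rewrite -F2 Hy yof_single.
Qed.

Lemma M_R {x : pt} : MLambda x -> Rset x.
Proof.
case=> HL Hw; split; [|split].
- by move=> e; rewrite Hw; apply: prodr_ge0 => i _; apply: (HL i).1.
- under eq_bigr => e _ do rewrite Hw.
  by rewrite -bigA_distr_bigA big1 // => i _; apply: (HL i).2.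
- move=> i j.
  pose F (i' : 'I_d) (k' : 'I_n.+1) : R :=
    (if i' == i then (k' == j i)%:R else 1) * x.1 i' k'.
  have E1 : \prod_(i' < d) \sum_(k' < n.+1) F i' k' = x.1 i (j i).
    rewrite (bigD1 i) //= [X in _ * X]big1 => [|i' Hi']; last first.
      by rewrite /F (negbTE Hi'); under eq_bigr => k' _ do rewrite mul1r; apply: (HL i').2.
    rewrite mulr1 /F eqxx (bigD1 (j i)) //= eqxx mul1r big1 ?addr0 // => k' Hk.
    by rewrite (negbTE Hk) mul0r.
  rewrite -E1 bigA_distr_bigA [RHS]big_mkcond /=; apply: eq_bigr => f _.
  rewrite /F big_split /= -big_mkcond big_pred1_eq -Hw.
  by case: (f i == j i); rewrite ?mul1r ?mul0r.
Qed.

Lemma conv_R (x : pt) : conv (@MLambda R d n) x -> Rset x.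
Proof.
case=> m [mu [p [Hmu [Hs [HM [H1 H2]]]]]].
have HR k := M_R (HM k).
split; [|split].
- move=> e; rewrite H2; apply: sumr_ge0 => k _.
  exact: mulr_ge0 (Hmu k) ((HR k).1 e).
- under eq_bigr => e _ do rewrite H2.
  rewrite exchange_big /= -Hs; apply: eq_bigr => k _.
  by rewrite -big_distrr /= (HR k).2.1 mulr1.
- move=> i j; rewrite H1.
  under eq_bigr => k _ do rewrite (HR k).2.2 big_distrr.
  by rewrite exchange_big /=; apply: eq_bigr => e _; rewrite H2.
Qed.

Definition vert (e : E) : pt :=
  (fun i k => (e i == k)%:R, fun e' => (e' == e)%:R).

Lemma vert_M e : MLambda (vert e).
Proof.
split.
  move=> i; split => [k|]; first by rewrite /= ler0n.
  rewrite /= (bigD1 (e i)) //= eqxx big1 ?addr0 // => k Hk.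
  by rewrite eq_sym (negbTE Hk).
move=> e' /=; case: (eqVneq e' e) => [->|ne].
  by rewrite big1 // => i _; rewrite eqxx.
have : ~~ [forall i, e' i == e i].
  by apply: contra ne => /forallP H; apply/eqP/ffunP => i; apply/eqP/H.
rewrite negb_forall => /existsP [i Hi].
by rewrite (bigD1 i) //= eq_sym (negbTE Hi) mul0r.
Qed.

Lemma R_conv (x : pt) : Rset x -> conv (@MLambda R d n) x.
Proof.
move=> [H0 [H1 H2]].
have Hsum : forall F : E -> R, \sum_(k < #|E|) F (enum_val k) = \sum_(t : E) F t.
  by move=> F; rewrite -(big_enum_val F); apply: eq_bigl => t; rewrite inE.
exists #|E|, (fun k => x.2 (enum_val k)), (fun k => vert (enum_val k)).
split; first by move=> k; apply: H0.
split; first by rewrite Hsum.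
split; first by move=> k; apply: vert_M.
split.
  move=> i k; rewrite (Hsum (fun e => x.2 e * (vert e).1 i k)) /=.
  have := H2 i [ffun _ => k]; rewrite ffunE => ->.
  rewrite big_mkcond /=; apply: eq_bigr => e _.
  by rewrite mulr_natr mulrb.
move=> e; rewrite (Hsum (fun e' => x.2 e' * (vert e').2 e)) /=.
rewrite (bigD1 e) //= eqxx mulr1 big1 ?addr0 // => e' He.
by rewrite eq_sym (negbTE He) mulr0.
Qed.

End Proofs.

Theorem theorem4p6 (R : realFieldType) (d n : nat) (hd : (0 < d)%N) (hn : (0 < n)%N) :
  forall x : point R d n,
    (conv (@MLambda R d n) x <-> projRLT x) /\ (projRLT x <-> Rset x).
Proof.
move=> x.
have PR : projRLT x <-> Rset x.
  split; first by case=> y Hy; apply: RLT_R Hy.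
  by move=> H; exists (@yof R d n x); apply: R_RLT.
split=> //; rewrite PR; split; [exact: conv_R | exact: R_conv].
Qed.
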